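(* Let $A\in\mathbb{R}^{m\times n}$ with $A\geq 0$ and $A^{\dagger}\geq 0$, and let $(U_k^{(i)},V_k^{(i)},E_k)_{k=1}^{p}$, $i=1,2$, be two proper weak regular multisplittings of $A$ (with the same weighting matrices $E_k$) such that $R(E_k)\subseteq R(A^{T})$ for each $k=1,\ldots,p$. If $V_k^{(2)}\geq V_k^{(1)}$ for each $k=1,\ldots,p$, then $\rho(H_1)\leq\rho(H_2)<1$, where $H_i=\sum_{k=1}^{p}E_k[U_k^{(i)}]^{\dagger}V_k^{(i)}$ for $i=1,2$.
   Context: $A^{\dagger}$ denotes the Moore–Penrose inverse, $\rho(\cdot)$ the spectral radius, $R(\cdot)$, $N(\cdot)$ range and null space; inequalities are entrywise. A splitting $A=U-V$ is proper if $R(U)=R(A)$ and $N(U)=N(A)$; a proper splitting is proper weak regular if $U^{\dagger}\geq 0$ and $U^{\dagger}V\geq 0$. A proper weak regular multisplitting of $A$ is a triplet $(U_k,V_k,E_k)_{k=1}^{p}$ where each $A=U_k-V_k$ is a proper weak regular splitting and each $E_k\geq 0$ is an $n\times n$ diagonal matrix with $\sum_{k=1}^{p}E_k=I_n$. *)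

(* Defs.v *)
From HB Require Import structures.
From mathcomp Require Import all_boot all_order all_algebra.
From mathcomp Require Import complex reals.
Set Implicit Arguments. Unset Strict Implicit. Unset Printing Implicit Defensive.
Import Order.TTheory GRing.Theory Num.Theory.
Local Open Scope ring_scope.

Section Defs.
Variable R : realType.

Definition mx_nonneg m n (A : 'M[R]_(m, n)) : Prop := forall i j, 0 <= A i j.

Definition mx_le m n (B C : 'M[R]_(m, n)) : Prop := forall i j, B i j <= C i j.

Definition is_MP_inverse m n (A : 'M[R]_(m, n)) (X : 'M[R]_(n, m)) : Prop :=
  [/\ A *m X *m A = A, X *m A *m X = X,
      (A *m X)^T = A *m X & (X *m A)^T = X *m A].

Definition in_range m n (A : 'M[R]_(m, n)) (y : 'cV[R]_m) : Prop :=
  exists x : 'cV[R]_n, y = A *m x.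

Definition in_null m n (A : 'M[R]_(m, n)) (x : 'cV[R]_n) : Prop := A *m x = 0.

Definition proper_splitting m n (A U V : 'M[R]_(m, n)) : Prop :=
  [/\ A = U - V,
      forall y, in_range U y <-> in_range A y
    & forall x, in_null U x <-> in_null A x].

Definition proper_weak_regular m n (A U V : 'M[R]_(m, n)) (Ud : 'M[R]_(n, m)) : Prop :=
  [/\ proper_splitting A U V, is_MP_inverse U Ud,
      mx_nonneg Ud & mx_nonneg (Ud *m V)].

Definition proper_weak_regular_multisplitting m n p (A : 'M[R]_(m, n))
    (U V : 'I_p -> 'M[R]_(m, n)) (Ud : 'I_p -> 'M[R]_(n, m))
    (E : 'I_p -> 'M[R]_n) : Prop :=
  [/\ forall k, proper_weak_regular A (U k) (V k) (Ud k),
      forall k, is_diag_mx (E k) /\ mx_nonneg (E k)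
    & \sum_(k < p) E k = 1%:M].

Definition char_roots n (M : 'M[R]_n) : seq R[i] :=
  sval (closed_field_poly_normal (char_poly (map_mx (fun x : R => (x%:C)%C) M))).

Definition spectral_radius n (M : 'M[R]_n) : R :=
  \big[Num.max/0]_(z <- char_roots M) complex.Re `|z|.

End Defs.

(* Main.v *)
Require Import Defs.
From HB Require Import structures.
From mathcomp Require Import all_boot all_order all_algebra.
From mathcomp Require Import complex reals.
From mathcomp Require Import ring lra.
Import Order.TTheory GRing.Theory Num.Theory.
Local Open Scope ring_scope.

Lemma mapC (R : realType) n (M : 'M[R]_n) i j :
  (map_mx (fun x : R => (x%:C)%C) M) i j = ((M i j)%:C)%C.
Proof. by rewrite /map_mx unlock /= /fun_of_matrix /= ffunE. Qed.

Lemma char_roots_diag (R : realType) n (M : 'M[R]_n) : is_diag_mx M ->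
  forall z, z \in char_roots M <-> exists i, z = ((M i i)%:C)%C.
Proof.
move=> /is_diag_mxP dM z.
rewrite /char_roots; case: closed_field_poly_normal => r /= Hr.
move: Hr; rewrite (monicP (char_poly_monic _)) scale1r.
have dM' : is_trig_mx (map_mx (fun x : R => (x%:C)%C) M).
  apply: is_diag_mx_is_trig; apply/is_diag_mxP => i j ij.
  by rewrite mapC dM.
rewrite (char_poly_trig dM') => Hr.
have -> : (z \in r) = root (\prod_(a <- r) ('X - a%:P)) z by rewrite root_prod_XsubC.
rewrite -Hr -(big_map (fun i => map_mx (fun x : R => (x%:C)%C) M i i) xpredT (fun a => 'X - a%:P)).
rewrite root_prod_XsubC; split.
  move=> /mapP [i _ ->]; by exists i; rewrite mapC.
by move=> [i ->]; apply/mapP; exists i; rewrite ?mem_index_enum // mapC.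
Qed.

Lemma Re_norm_C (R : realType) (x : R) : complex.Re `|(x%:C)%C| = `|x|.
Proof.
rewrite normc_def /= expr0n /= addr0 sqrtr_sqr //.
Qed.
Arguments char_roots_diag {R n M}.
Lemma bigmax_seq_le (T : eqType) (R : realType) (s : seq T) (F : T -> R) (P : R -> Prop) :
  P 0 -> (forall x y, P x -> P y -> P (Num.max x y)) -> (forall z, z \in s -> P (F z)) ->
  P (\big[Num.max/0]_(z <- s) F z).
Proof.
move=> P0 Pm; elim: s => [|a s IH] H; first by rewrite big_nil.
rewrite big_cons; apply: Pm; first by apply: H; rewrite inE eqxx.
by apply: IH => z zs; apply: H; rewrite inE zs orbT.
Qed.

Lemma bigmax_seq_ge (T : eqType) (R : realType) (s : seq T) (F : T -> R) z :
  z \in s -> F z <= \big[Num.max/0]_(z <- s) F z.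
Proof.
elim: s => [|a s IH] //; rewrite inE big_cons => /orP [/eqP -> | /IH h].
  by rewrite le_max lexx.
by rewrite le_max h orbT.
Qed.

Lemma sr_le (R : realType) n (M N : 'M[R]_n) : is_diag_mx M -> is_diag_mx N ->
  (forall i, 0 <= M i i <= N i i) -> spectral_radius M <= spectral_radius N.
Proof.
move=> dM dN H.
have N0 : 0 <= spectral_radius N.
  rewrite /spectral_radius; apply: (@bigmax_seq_le _ _ _ _ (fun x => 0 <= x)).
  - by [].
  - by move=> x y x0 y0; rewrite le_max x0.
  - by move=> z _; rewrite normc_def /= sqrtr_ge0.
rewrite {1}/spectral_radius; apply: (@bigmax_seq_le _ _ _ _ (fun x => x <= spectral_radius N)) => //.
  by move=> x y x0 y0; rewrite ge_max x0.
move=> z.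
move=> /(char_roots_diag dM) [i ->]; rewrite Re_norm_C.
have /andP [h1 h2] := H i.
rewrite ger0_norm //; apply: (le_trans h2).
have -> : N i i = complex.Re `|((N i i)%:C)%C|.
  by rewrite Re_norm_C ger0_norm // (le_trans h1 h2).
rewrite /spectral_radius; apply: (@bigmax_seq_ge _ _ _ (fun z => complex.Re `|z|)); apply/(char_roots_diag dN); by exists i.
Qed.

Lemma sr_lt1 (R : realType) n (N : 'M[R]_n) : is_diag_mx N ->
  (forall i, `|N i i| < 1) -> spectral_radius N < 1.
Proof.
move=> dN H; rewrite /spectral_radius; apply: (@bigmax_seq_le _ _ _ _ (fun x => x < 1)) => //.
  by move=> x y x0 y0; rewrite gt_max x0.
by move=> z /(char_roots_diag dN) [i ->]; rewrite Re_norm_C.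
Qed.
Lemma mx_ext (R : realType) m n (X Y : 'M[R]_(m, n)) :
  (forall y : 'cV[R]_n, X *m y = Y *m y) -> X = Y.
Proof.
move=> H; apply/matrixP => i j.
have := congr1 (fun M : 'cV[R]_m => M i ord0) (H (delta_mx j ord0)).
by rewrite -!colE !mxE.
Qed.

Lemma mul_diag_r (R : realType) m n (X : 'M[R]_(m, n)) (T : 'M[R]_n) i j :
  is_diag_mx T -> (X *m T) i j = X i j * T j j.
Proof.
move=> /is_diag_mxP dT; rewrite mxE (bigD1 j) //= big1 ?addr0 // => l lj.
by rewrite dT ?mulr0.
Qed.

Lemma AdA1 (R : realType) m n p (A : 'M[R]_(m, n)) Ad (E : 'I_p -> 'M[R]_n) :
  is_MP_inverse A Ad -> \sum_(k < p) E k = 1%:M ->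
  (forall k y, in_range (E k) y -> in_range A^T y) -> Ad *m A = 1%:M.
Proof.
case=> h1 h2 h3 h4 hE hR; apply: mx_ext => y; rewrite mul1mx.
have key : forall x : 'cV[R]_m, Ad *m A *m (A^T *m x) = A^T *m x.
  by move=> x; rewrite -h4 mulmxA -trmx_mul mulmxA h1.
have -> : y = \sum_(k < p) (E k *m y) by rewrite -mulmx_suml hE mul1mx.
rewrite mulmx_sumr; apply: eq_bigr => k _.
have [x ->] := hR k (E k *m y) (ex_intro _ y erefl).
exact: key.
Qed.

Lemma split_facts (R : realType) m n (A U V : 'M[R]_(m, n)) (Ad Ud : 'M[R]_(n, m)) :
  Ad *m A = 1%:M -> mx_nonneg A -> proper_weak_regular A U V Ud ->
  [/\ (forall i j, i != j -> (Ud *m V) i j = 0),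
      (forall j, 0 <= (Ud *m V) j j /\ (Ud *m V) j j = 1 - (Ud *m A) j j),
      (forall j, 0 < (Ud *m A) j j)
    & (forall i j, A i j = U i j * (Ud *m A) j j)].
Proof.
move=> AdA Ann [[eA hR hN] [u1 u2 u3 u4] Udn T0].
have UdU : Ud *m U = 1%:M.
  apply: mx_ext => x; rewrite mul1mx.
  have : in_null U (Ud *m U *m x - x) by rewrite /in_null mulmxBr !mulmxA u1 subrr.
  move/hN; rewrite /in_null => h.
  apply/eqP; rewrite -subr_eq0; apply/eqP.
  by have := congr1 (mulmx Ad) h; rewrite mulmx0 mulmxA AdA mul1mx.
have UUdA : U *m Ud *m A = A.
  apply: mx_ext => x.
  have [w hw] : in_range U (A *m x) by apply/hR; exists x.
  by rewrite -mulmxA hw !mulmxA u1.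
have T1C : Ud *m V = 1%:M - Ud *m A.
  by rewrite eA mulmxBr UdU opprB addrC subrK.
have Cnn : forall i j, 0 <= (Ud *m A) i j.
  by move=> i j; rewrite mxE; apply: sumr_ge0 => l _; apply: mulr_ge0.
have Cdiag : forall i j : 'I_n, i != j -> (Ud *m A) i j = 0.
  move=> i j ij; apply/eqP; rewrite eq_le Cnn andbT.
  by have := T0 i j; rewrite T1C !mxE (negbTE ij) mulr0n sub0r oppr_ge0.
have dC : is_diag_mx (Ud *m A) by apply/is_diag_mxP => i j ij; exact: Cdiag.
have AUC : forall i j, A i j = U i j * (Ud *m A) j j.
  by move=> i j; rewrite -{1}UUdA -mulmxA mul_diag_r.
split.
- move=> i j ij; have := Cdiag i j ij.
  by rewrite T1C !mxE (negbTE ij) mulr0n sub0r => ->; rewrite oppr0.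
- by move=> j; split; [exact: T0 | rewrite T1C !mxE eqxx mulr1n].
- move=> j; rewrite lt_def Cnn andbT; apply/eqP => C0.
  have := congr1 (fun M : 'M[R]_n => M j j) AdA; rewrite !mxE eqxx mulr1n big1 => [|l _].
    by move/esym/eqP; rewrite oner_eq0.
  by rewrite AUC C0 !mulr0.
- exact: AUC.
Qed.

Lemma cmp_c (R : realType) m n (A U1 V1 U2 V2 : 'M[R]_(m, n)) (Ad : 'M[R]_(n, m))
  (c1 c2 : 'I_n -> R) :
  Ad *m A = 1%:M -> mx_nonneg A -> A = U1 - V1 -> A = U2 - V2 ->
  (forall i j, A i j = U1 i j * c1 j) -> (forall i j, A i j = U2 i j * c2 j) ->
  (forall j, 0 < c1 j) -> (forall j, 0 < c2 j) -> mx_le V1 V2 ->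
  forall j, c2 j <= c1 j.
Proof.
move=> AdA Ann e1 e2 a1 a2 p1 p2 hV j.
case: (boolP [exists i, 0 < A i j]) => [/existsP [i Ai] | /existsPn Hn]; last first.
  have := congr1 (fun M : 'M[R]_n => M j j) AdA; rewrite !mxE eqxx mulr1n big1 => [|l _].
    by move/esym/eqP; rewrite oner_eq0.
  have : A l j = 0 by apply/eqP; rewrite eq_le Ann andbT leNgt Hn.
  by move->; rewrite mulr0.
have E1 : A i j = U1 i j - V1 i j by rewrite {1}e1 !mxE.
have E2 : A i j = U2 i j - V2 i j by rewrite {1}e2 !mxE.
have := hV i j; have := a1 i j; have := a2 i j; have := p1 j; have := p2 j.
move: Ai E1 E2; set a := A i j; set u1 := U1 i j; set u2 := U2 i j.
set v1 := V1 i j; set v2 := V2 i j; set d1 := c1 j; set d2 := c2 j.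
move=> Ai E1 E2 q2 q1 b2 b1 hv.
have h0 : 0 <= d1 * d2 * (u2 - u1).
  apply: mulr_ge0; first by apply: mulr_ge0; apply: ltW.
  rewrite /a in E1 E2; lra.
have h1 : (d1 - d2) * a = d1 * d2 * (u2 - u1).
  by rewrite mulrBl {1}b2 {1}b1; ring.
nra.
Qed.

Arguments split_facts {R m n A U V Ad Ud}.
Arguments AdA1 {R m n p A Ad E}.
Arguments cmp_c {R m n A U1 V1 U2 V2 Ad c1 c2}.

Lemma Hentry (R : realType) n p (E T : 'I_p -> 'M[R]_n) i j :
  (forall k, is_diag_mx (T k)) ->
  (\sum_(k < p) E k *m T k) i j = \sum_(k < p) E k i j * T k j j.
Proof. by move=> dT; rewrite summxE; apply: eq_bigr => k _; rewrite mul_diag_r. Qed.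

Theorem theorem5p11 (R : realType) (m n p : nat) (A : 'M[R]_(m, n))
  (Ad : 'M[R]_(n, m))
  (U1 V1 U2 V2 : 'I_p -> 'M[R]_(m, n)) (U1d U2d : 'I_p -> 'M[R]_(n, m))
  (E : 'I_p -> 'M[R]_n) :
  mx_nonneg A -> is_MP_inverse A Ad -> mx_nonneg Ad ->
  proper_weak_regular_multisplitting A U1 V1 U1d E ->
  proper_weak_regular_multisplitting A U2 V2 U2d E ->
  (forall k y, in_range (E k) y -> in_range A^T y) ->
  (forall k, mx_le (V1 k) (V2 k)) ->
  let H1 := \sum_(k < p) E k *m (U1d k *m V1 k) in
  let H2 := \sum_(k < p) E k *m (U2d k *m V2 k) in
  spectral_radius H1 <= spectral_radius H2 /\ spectral_radius H2 < 1.
Proof.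
move=> An MP Adn [S1 E1 sE] [S2 _ _] hR hV H1 H2.
have AdA := AdA1 MP sE hR.
have dT1 : forall k, is_diag_mx (U1d k *m V1 k).
  by move=> k; case: (split_facts AdA An (S1 k)) => h _ _ _; apply/is_diag_mxP.
have dT2 : forall k, is_diag_mx (U2d k *m V2 k).
  by move=> k; case: (split_facts AdA An (S2 k)) => h _ _ _; apply/is_diag_mxP.
have hT1 : forall k j, 0 <= (U1d k *m V1 k) j j /\ (U1d k *m V1 k) j j = 1 - (U1d k *m A) j j.
  by move=> k; case: (split_facts AdA An (S1 k)).
have hT2 : forall k j, 0 <= (U2d k *m V2 k) j j /\ (U2d k *m V2 k) j j = 1 - (U2d k *m A) j j.
  by move=> k; case: (split_facts AdA An (S2 k)).
have pC2 : forall k j, 0 < (U2d k *m A) j j.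
  by move=> k; case: (split_facts AdA An (S2 k)).
have cmp : forall k j, (U2d k *m A) j j <= (U1d k *m A) j j.
  move=> k j.
  case: (split_facts AdA An (S1 k)) => _ _ p1 a1.
  case: (split_facts AdA An (S2 k)) => _ _ p2 a2.
  case: (S1 k) => [[e1 _ _] _ _ _]; case: (S2 k) => [[e2 _ _] _ _ _].
  exact: (cmp_c AdA An e1 e2 a1 a2 p1 p2 (hV k) j).
have Enn : forall k i j, 0 <= E k i j by move=> k i j; case: (E1 k) => _; apply.
have dE : forall k, is_diag_mx (E k) by move=> k; case: (E1 k).
have dH : forall (T : 'I_p -> 'M[R]_n), (forall k, is_diag_mx (T k)) ->
    is_diag_mx (\sum_(k < p) E k *m T k).
  move=> T dT; apply/is_diag_mxP => i j ij; rewrite Hentry // big1 // => k _.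
  by move/is_diag_mxP: (dE k) => ->; rewrite ?mul0r.
have Esum : forall j, \sum_(k < p) E k j j = 1.
  by move=> j; have := congr1 (fun M : 'M[R]_n => M j j) sE; rewrite summxE mxE eqxx mulr1n.
have H2lt : forall j, (\sum_(k < p) E k *m (U2d k *m V2 k)) j j < 1.
  move=> j; rewrite Hentry //.
  case: (boolP [exists k, 0 < E k j j]) => [/existsP [k0 Ek0] | /existsPn Hn]; last first.
    have := Esum j; rewrite big1 => [|k _]; first by move/eqP; rewrite eq_sym oner_eq0.
    by apply/eqP; rewrite eq_le Enn andbT leNgt Hn.
  rewrite -(Esum j) (bigD1 k0) //= [X in _ < X](bigD1 k0) //=.
  apply: ltr_leD.
    rewrite gtr_pMr //; have [_ ->] := hT2 k0 j; have := pC2 k0 j; lra.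
  apply: ler_sum => k _; rewrite ler_piMr //; have [h ->] := hT2 k j.
  have := pC2 k j; lra.
rewrite /H1 /H2; split; last first.
  apply: sr_lt1; first exact: dH.
  move=> j; rewrite ger0_norm; first exact: H2lt.
  rewrite Hentry //; apply: sumr_ge0 => k _; apply: mulr_ge0 => //; exact: (hT2 k j).1.
apply: sr_le; [exact: dH | exact: dH | move=> j].
rewrite !Hentry //; apply/andP; split.
  by apply: sumr_ge0 => k _; apply: mulr_ge0 => //; exact: (hT1 k j).1.
apply: ler_sum => k _; apply: ler_wpM2l => //.
have [_ ->] := hT1 k j; have [_ ->] := hT2 k j; have := cmp k j; lra.
Qed.
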